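(* Let $L$ be a finite $\mathcal{L}$-lattice with $|L|\le n$. Then $L$ has the interpolation property iff every valid $a\le b$ with at most $n$ left variables has an interpolant, i.e. a formula $i$ whose variables are all intersection variables of $a,b$ such that $a\le i$ and $i\le b$ are valid.
   Context: A lattice-oriented signature $\mathcal{L}$ is a finite set of connectives. Each connective $c$ has an arity $n_c\in\mathbb{N}$ and a polarity $p_c:\{1,\dots,n_c\}\to\{-,+\}$. The signature contains binary connectives $\lor,\land,\to$ with $p_\lor(1)=p_\lor(2)=p_\land(1)=p_\land(2)=+$, $p_\to(1)=-$ and $p_\to(2)=+$; nullary connectives are truth constants. A finite $\mathcal{L}$-lattice is a finite set $L$ together with an $n_c$-ary operation $c^L$ on $L$ for each connective $c$, such that: - $(L,\lor^L,\land^L)$ is a lattice, with order $x\le y$ iff $x\land y=x$; its top element is denoted $1$; - $c^L$ is monotone in every argument $i$ with $p_c(i)=+$ and antitone in every argument $i$ with $p_c(i)=-$; - for all $a,b\in L$: $1\le a\to^L b$ iff $a\le b$. Formulas (words) are built from propositional variables using the connectives. A valuation assigns elements of $L$ to the variables and extends to all formulas via the operations $c^L$. For formulas $a,b$, ''$a\le b$ is valid'' means that the value of $a$ is $\le$ the value of $b$ under every valuation. For a valid $a\le b$, the variables occurring only in $a$ are the left variables, those occurring only in $b$ are the right variables, and those occurring in both are the intersection variables. $L$ has the interpolation property iff for all formulas $a,b$ with $a\le b$ valid there is a formula $i$ whose variables are all intersection variables of $a,b$ such that $a\le i$ and $i\le b$ are valid. If there are no intersection variables, $i$ must be a closed formula.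 *)

(* Defs.v *)
From HB Require Import structures.
From mathcomp Require Import all_boot all_order.
Set Implicit Arguments. Unset Strict Implicit. Unset Printing Implicit Defensive.
Import Order.TTheory.
Local Open Scope order_scope.

(* A lattice-oriented signature: the three binary connectives \/, /\, -> are
   built into the syntax (constructors Join, Meet, Imp below); [conn] is the
   finite set of the remaining connectives, each with an arity and a polarity
   (true = +, false = -). Nullary connectives are truth constants. *)
Record signature := Signature {
  conn : finType;
  arity : conn -> nat;
  pol : forall c : conn, 'I_(arity c) -> bool }.

Inductive form (S : signature) : Type :=
| Var : nat -> form S
| Join : form S -> form S -> form S
| Meet : form S -> form S -> form S
| Imp : form S -> form S -> form S
| App : forall c : conn S, ('I_(arity c) -> form S) -> form S.

Arguments Var {S} _.

Fixpoint vars (S : signature) (t : form S) : seq nat :=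
  match t with
  | Var x => [:: x]
  | Join a b | Meet a b | Imp a b => vars a ++ vars b
  | App c f => flatten (map (fun i => vars (f i)) (enum 'I_(arity c)))
  end.

Section Semantics.
Variables (S : signature) (d : Order.disp_t) (L : finTBLatticeType d)
          (imp : L -> L -> L) (op : forall c : conn S, ('I_(arity c) -> L) -> L).

(* Conditions making (L, join, meet, imp, op) a finite L-lattice.
   The lattice structure and finiteness are given by [finTBLatticeType]. *)
Definition is_LLattice : Prop :=
  (forall a a' b b' : L, a' <= a -> b <= b' -> imp a b <= imp a' b')
  /\ (forall (c : conn S) (g h : 'I_(arity c) -> L),
        (forall i, if pol i then g i <= h i else h i <= g i) -> op g <= op h)
  /\ (forall a b : L, \top <= imp a b <-> a <= b).

Fixpoint eval (v : nat -> L) (t : form S) : L :=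
  match t with
  | Var x => v x
  | Join a b => eval v a `|` eval v b
  | Meet a b => eval v a `&` eval v b
  | Imp a b => imp (eval v a) (eval v b)
  | App c f => op (fun i => eval v (f i))
  end.

Definition valid (a b : form S) : Prop := forall v : nat -> L, eval v a <= eval v b.

Definition left_vars (a b : form S) : seq nat :=
  undup [seq x <- vars a | x \notin vars b].

Definition interpolant (a b i : form S) : Prop :=
  (forall x, x \in vars i -> (x \in vars a) && (x \in vars b))
  /\ valid a i /\ valid i b.

Definition interpolation_property : Prop :=
  forall a b : form S, valid a b -> exists i : form S, interpolant a b i.

End Semantics.

(* Main.v *)
Require Import Defs.
From mathcomp Require Import all_boot all_order.
From Stdlib Require Import FunctionalExtensionality.
Set Implicit Arguments. Unset Strict Implicit. Unset Printing Implicit Defensive.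
Import Order.TTheory.

Section Aux.
Local Open Scope order_scope.
Variable S : signature.

Definition form_ind' (P : form S -> Prop)
  (HV : forall x, P (Var x))
  (HJ : forall a b, P a -> P b -> P (Join a b))
  (HM : forall a b, P a -> P b -> P (Meet a b))
  (HI : forall a b, P a -> P b -> P (Imp a b))
  (HA : forall c f, (forall i, P (f i)) -> P (@App S c f)) : forall t, P t :=
  fix F t := match t with
  | Var x => HV x
  | Join a b => HJ a b (F a) (F b)
  | Meet a b => HM a b (F a) (F b)
  | Imp a b => HI a b (F a) (F b)
  | App c f => HA c f (fun i => F (f i))
  end.

Fixpoint rename (r : nat -> nat) (t : form S) : form S :=
  match t with
  | Var x => Var (r x)
  | Join a b => Join (rename r a) (rename r b)
  | Meet a b => Meet (rename r a) (rename r b)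
  | Imp a b => Imp (rename r a) (rename r b)
  | App c f => @App S c (fun i => rename r (f i))
  end.

Lemma vars_rename r t : vars (rename r t) = map r (vars t).
Proof.
elim/form_ind': t => [x|a b IHa IHb|a b IHa IHb|a b IHa IHb|c f IH] /=;
  rewrite ?map_cat ?IHa ?IHb //.
rewrite map_flatten -map_comp; congr flatten; apply: eq_map => i /=.
by rewrite IH.
Qed.

Lemma vars_App (c : conn S) (f : 'I_(arity c) -> form S) i x :
  x \in vars (f i) -> x \in vars (App f).
Proof.
move=> H /=; apply/flattenP; exists (vars (f i)) => //.
by apply: map_f; rewrite mem_enum.
Qed.

Variables (d : Order.disp_t) (L : finTBLatticeType d)
  (imp : L -> L -> L) (op : forall c : conn S, ('I_(arity c) -> L) -> L).

Lemma eval_rename v r t : eval imp op v (rename r t) = eval imp op (v \o r) t.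
Proof.
elim/form_ind': t => [x|a b IHa IHb|a b IHa IHb|a b IHa IHb|c f IH] /=;
  rewrite ?IHa ?IHb //.
by congr op; apply: functional_extensionality => i; rewrite IH.
Qed.

Lemma eval_ext v w t : (forall x, x \in vars t -> v x = w x) ->
  eval imp op v t = eval imp op w t.
Proof.
elim/form_ind': t => [x|a b IHa IHb|a b IHa IHb|a b IHa IHb|c f IH] /= H;
  try (rewrite IHa ?IHb // => x Hx; apply: H; rewrite mem_cat Hx ?orbT //).
- by apply: H; rewrite inE.
- congr op; apply: functional_extensionality => i; apply: IH => x Hx.
  by apply: H; apply: vars_App Hx.
Qed.

Lemma maxlt x s : x \in s -> (x < (foldr maxn 0 s).+1)%N.
Proof.
elim: s => // y s IH; rewrite inE /= ltnS => /orP [/eqP ->|/IH].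
  by rewrite leq_maxl.
by rewrite ltnS => H; apply: leq_trans H (leq_maxr _ _).
Qed.

Definition bigJ (t0 : form S) (ts : seq (form S)) := foldr (@Join S) t0 ts.

Variables (T : eqType) (F : T -> form S).

Lemma bigJ_ge v f0 fs f : f \in f0 :: fs ->
  eval imp op v (F f) <= eval imp op v (bigJ (F f0) (map F fs)).
Proof.
elim: fs f => [|u fs IH] f /=; first by rewrite inE => /eqP ->.
rewrite !inE => /orP [/eqP ->|/orP [/eqP ->|H]] /=.
- by apply: le_trans (IH f0 _) _; rewrite ?inE ?eqxx // leUr.
- by rewrite leUl.
- by apply: le_trans (IH f _) _; rewrite ?inE ?H ?orbT // leUr.
Qed.

Lemma bigJ_le v f0 fs u : (forall f, f \in f0 :: fs -> eval imp op v (F f) <= u) ->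
  eval imp op v (bigJ (F f0) (map F fs)) <= u.
Proof.
elim: fs => [|w fs IH] /= H; first by apply: H; rewrite inE.
rewrite leUx H ?inE ?eqxx ?orbT //= IH // => t; rewrite inE => /orP [/eqP ->|Ht].
  by apply: H; rewrite inE eqxx.
by apply: H; rewrite !inE Ht !orbT.
Qed.

Lemma bigJ_vars x f0 fs : x \in vars (bigJ (F f0) (map F fs)) ->
  exists2 f, f \in f0 :: fs & x \in vars (F f).
Proof.
elim: fs => [|w fs IH] /=; first by exists f0; rewrite ?inE.
rewrite mem_cat => /orP [H|/IH [t Ht Hx]]; first by exists w; rewrite ?inE ?eqxx ?orbT.
by exists t => //; move: Ht; rewrite !inE => /orP [->|->]; rewrite ?orbT.
Qed.

End Aux.

Theorem lemma1 (S : signature) (d : Order.disp_t) (L : finTBLatticeType d)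
  (imp : L -> L -> L) (op : forall c : conn S, ('I_(arity c) -> L) -> L)
  (HL : is_LLattice imp op) (n : nat) (Hn : #|L| <= n) :
  interpolation_property imp op <->
  (forall a b : form S, valid imp op a b -> size (left_vars a b) <= n ->
     exists i : form S, interpolant imp op a b i).
Proof.
split; first by move=> H a b Hab _; apply: H.
move=> H a b Hab.
have n0 : 0 < n.
  by apply: leq_trans Hn; apply/card_gt0P; exists (\top)%O.
set lv := left_vars a b.
set k := size lv.
set N := (foldr maxn 0 (vars a ++ vars b)).+1.
pose g (f : {ffun 'I_k -> 'I_n}) (j : nat) : nat :=
  if insub j is Some o then val (f o) else 0.
have gn (f : {ffun 'I_k -> 'I_n}) j : g f j < n.
  rewrite /g; case: (insub j) => [o|] //=.

pose rho f (x : nat) := if x \in vars b then x else N + g f (index x lv).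
pose f0 : {ffun 'I_k -> 'I_n} := [ffun=> Ordinal n0].
pose F f := rename (rho f) a.
pose a' := bigJ (F f0) (map F (enum {ffun 'I_k -> 'I_n})).
have ltN x : x \in vars b -> (x < N)%N.
  by move=> Hx; apply: maxlt; rewrite mem_cat Hx orbT.
have a'v : forall x, x \in vars a' -> exists f, exists2 y, y \in vars a & x = rho f y.
  move=> x /bigJ_vars [f _]; rewrite /F vars_rename => /mapP [y Hy ->].
  by exists f, y.
have valid' : valid imp op a' b.
  move=> v; apply: bigJ_le => f _; rewrite /F eval_rename.
  apply: le_trans (Hab _) _; rewrite (eval_ext _ _ (w:=v)) //.
  move=> x Hx /=; by rewrite /rho Hx.
have [|i [Hi1 [Hi2 Hi3]]] := H a' b valid'.
  rewrite /left_vars.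
  have -> : n = size [seq N + m | m <- iota 0 n] by rewrite size_map size_iota.
  apply: uniq_leq_size; first exact: undup_uniq.
  move=> x; rewrite mem_undup mem_filter => /andP [Hxb /a'v [f [y Hy Hxy]]].
  move: Hxb; rewrite Hxy /rho; case: ifP => [->//|_ _].
  by apply: map_f; rewrite mem_iota add0n gn.
exists i; split; [|split] => //.
- move=> x Hx; have /andP [Hxa' Hxb] := Hi1 x Hx.
  rewrite Hxb andbT; have [f [y Hy Hxy]] := a'v x Hxa'.
  move: Hxy Hxb; rewrite /rho; case: ifP => [_ -> //|_ -> /ltN].
  by rewrite ltnNge leq_addr.
- move=> v.
  pose e := enum L.
  have He y : index (v y) e < n.
    apply: leq_trans Hn; rewrite cardE -/e index_mem /e mem_enum //.
  pose f : {ffun 'I_k -> 'I_n} := [ffun j : 'I_k => Ordinal (He (nth 0%N lv j))].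
  pose w x := if N <= x then nth (v x) e (x - N) else v x.
  have wv x : x \in vars b -> w x = v x.
    by move=> /ltN Hx; rewrite /w leqNgt Hx.
  have -> : eval imp op v i = eval imp op w i.
    apply: eval_ext => x /Hi1 /andP [_ Hx]; by rewrite wv.
  apply: le_trans (Hi2 w).
  have -> : eval imp op v a = eval imp op w (F f).
    rewrite eval_rename; apply: eval_ext => x Hx /=.
    rewrite /rho; case: ifP => Hxb; first by rewrite wv.
    have Hlv : x \in lv by rewrite /lv /left_vars mem_undup mem_filter Hxb Hx.
    have Hk : index x lv < k by rewrite index_mem.
    rewrite /w leq_addr addKn /g insubT /= ffunE /= (nth_index 0%N Hlv).
    by rewrite /e nth_index // mem_enum.
  by apply: bigJ_ge; rewrite inE mem_enum orbT.
Qed.
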